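(* Let $S$ be a compact oriented surface with corner, $\Phi$ a flow on $S$, $C\subset\mathrm{Int}(S)$ a $\Phi$-invariant (piecewise smooth) simple closed curve, $\pi:\widetilde S\to S$ the cutting surgery along $C$, and $\widetilde\Phi$ the flow on $\widetilde S$ with $\pi\circ\widetilde\Phi=\Phi\circ(\mathrm{Id}_{\mathbb R}\times\pi)$. Let $x\in S\setminus C$ and $\widetilde x:=\pi^{-1}(x)$. Then $\pi(\omega(\widetilde x))=\omega(x)$, where $\omega(\widetilde x)$ is taken with respect to $\widetilde\Phi$ and $\omega(x)$ with respect to $\Phi$.
   Context: Cutting surgery: with a collar $C\times(-\epsilon,\epsilon)\subset\mathrm{Int}(S)$, $\widetilde S=(S\setminus C)\sqcup C_1\sqcup C_2$, $C_1,C_2$ copies of $C$ attached as the boundaries of $C\times(-\epsilon,0)$ and $C\times(0,\epsilon)$; $\pi$ is the identity on $S\setminus C$ and identifies each $C_i$ with $C$. The $\omega$-limit set of $x$ is the set of limits $\lim_n\Phi(t_n,x)$ over sequences $t_n\to\infty$. *)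

(* Defs.v *)
From HB Require Import structures.
From mathcomp Require Import all_boot all_order all_algebra.
From mathcomp Require Import all_classical all_reals all_analysis.
Set Implicit Arguments. Unset Strict Implicit. Unset Printing Implicit Defensive.
Import Order.TTheory GRing.Theory Num.Theory.
Import numFieldNormedType.Exports.
Local Open Scope classical_set_scope.
Local Open Scope ring_scope.

Section Defs.
Variable R : realType.

Definition is_flow (X : topologicalType) (Phi : R -> X -> X) : Prop :=
  continuous (fun p : R * X => Phi p.1 p.2) /\
  (forall x, Phi 0 x = x) /\
  (forall s t x, Phi (s + t) x = Phi s (Phi t x)).

Definition omega_limit (X : topologicalType) (Phi : R -> X -> X) (x : X) : set X :=
  [set y | exists t : nat -> R,
     (forall M : R, \forall n \near \oo, M < t n) /\
     (fun n => Phi (t n) x) @ \oo --> y].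

(** Strips in the (angle, height) plane; the angle is taken modulo 1,
    so a map defined on them and 1-periodic in the angle is a map on
    (circle) x (interval). *)
Definition strip (eps : R) : set (R * R) := [set p | - eps < p.2 < eps].
Definition lower_strip (eps : R) : set (R * R) := [set p | - eps < p.2 <= 0].
Definition upper_strip (eps : R) : set (R * R) := [set p | 0 <= p.2 < eps].
Definition zero_section : set (R * R) := [set p | p.2 = 0].

(** f, on the domain A, factors injectively through (R/Z) x R. *)
Definition circ_injective (X : Type) (f : R * R -> X) (A : set (R * R)) : Prop :=
  forall p q, A p -> A q ->
    (f p = f q <-> p.2 = q.2 /\ exists k : int, p.1 = q.1 + k%:~R).

Definition open_on (X Y : topologicalType) (f : X -> Y) (A : set X) : Prop :=
  forall U, open U -> open (f @` (U `&` A)).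

(** e : S^1 x (-eps,eps) -> S is a collar (topological embedding onto an
    open subset of S, hence inside the interior of S); the curve is
    C = e(S^1 x {0}). *)
Definition collar (S : topologicalType) (e : R * R -> S) (eps : R) : Prop :=
  0 < eps /\
  {within strip eps, continuous e} /\
  circ_injective e (strip eps) /\
  open_on e (strip eps).

Definition collar_curve (S : Type) (e : R * R -> S) : set S :=
  e @` zero_section.

(** Cutting surgery along C = e(S^1 x {0}):
    pi : St -> S is the identity (homeomorphism) over S \ C, and
    St contains the two copies C1 = e1(S^1 x {0}), C2 = e2(S^1 x {0}) of C,
    attached as boundaries of the half collars e1(S^1 x (-eps,0)) and
    e2(S^1 x (0,eps)), with pi o e1 = e and pi o e2 = e. *)
Definition cutting_surgery (S St : topologicalType) (e : R * R -> S) (eps : R)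
    (pi : St -> S) (e1 e2 : R * R -> St) : Prop :=
  let C := collar_curve e in
  continuous pi /\
  (* pi is a homeomorphism from pi^-1(S \ C) onto S \ C *)
  (forall y, ~ C y -> exists! yt, pi yt = y) /\
  open_on pi (pi @^-1` (~` C)) /\
  {within lower_strip eps, continuous e1} /\
  {within upper_strip eps, continuous e2} /\
  circ_injective e1 (lower_strip eps) /\
  circ_injective e2 (upper_strip eps) /\
  open_on e1 (lower_strip eps) /\
  open_on e2 (upper_strip eps) /\
  (forall p, lower_strip eps p -> pi (e1 p) = e p) /\
  (forall p, upper_strip eps p -> pi (e2 p) = e p) /\
  pi @^-1` C = e1 @` zero_section `|` e2 @` zero_section /\
  [disjoint e1 @` zero_section & e2 @` zero_section].

End Defs.

(* Main.v *)
Require Import Defs.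
From HB Require Import structures.
From mathcomp Require Import all_boot all_order all_algebra.
From mathcomp Require Import all_classical all_reals all_analysis.
Import Order.TTheory GRing.Theory Num.Theory.
Import numFieldNormedType.Exports.
Local Open Scope classical_set_scope.
Local Open Scope ring_scope.

Lemma sub_near (P : nat -> Prop) (phi : nat -> nat) :
  (forall n, (n <= phi n)%N) -> (\forall n \near \oo, P n) ->
  \forall n \near \oo, P (phi n).
Proof.
move=> H [N _ HN]; exists N => // n /= Hn; apply: HN; exact: leq_trans Hn (H n).
Qed.

Lemma lift_key (R : realType) (S St : pseudoMetricType R)
  (e : R * R -> S) (eps : R) (pi : St -> S) (ei : R * R -> St) (D : set (R * R))
  (a : nat -> S) (b : nat -> St) (p : R * R) :
  open_on e (strip eps) -> circ_injective e (strip eps) ->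
  {within D, continuous ei} -> circ_injective ei D ->
  (forall q, D q -> pi (ei q) = e q) ->
  (forall q r, q.2 = r.2 -> D q -> D r) ->
  D p -> strip eps p ->
  (forall n, exists! z, pi z = a n) ->
  (forall n, pi (b n) = a n) ->
  (\forall n \near \oo, exists c, D c /\ strip eps c /\ e c = a n) ->
  a @ \oo --> e p ->
  b @ \oo --> ei p.
Proof.
move=> oe cie cei ciei pei Dinv Dp sp ua pb ev acv V HV.
have := (@subspace_continuousP _ D _ ei).1 cei p Dp V HV.
rewrite nbhs_simpl /= /within nbhsE => -[W [oW Wp] WV].
have oeW := oe W oW.
have nW : nbhs (e p) (e @` (W `&` strip eps)).
  by apply: open_nbhs_nbhs; split => //; exists p.
have := acv _ nW.
move: ev; rewrite !nbhs_simpl => ev ev2.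
suff : \forall n \near \oo, V (b n) by [].
near=> n.
have [c [Wc sc] ec] : (e @` (W `&` strip eps)) (a n).
  near: n; exact: ev2.
have : exists d, D d /\ strip eps d /\ e d = a n.
  near: n. exact: ev.
move=> [b0 [Db [sb eb]]].
have [h2 [k hk]] : c.2 = b0.2 /\ exists k : int, c.1 = b0.1 + k%:~R.
  by apply/(cie c b0 sc sb); rewrite ec eb.
have Dc : D c by apply: (Dinv b0) => //.
have eic : ei c = ei b0 by apply/(ciei c b0 Dc Db); split => //; exists k.
have [z [_ zu]] := ua n.
have -> : b n = ei c.
  rewrite eic -(zu (b n) (pb n)); apply: zu; rewrite pei // eb //.
exact: WV.
Unshelve. all: end_near.
Qed.

Lemma cvg_sub (S : topologicalType) (f : nat -> S) (y : S) (phi : nat -> nat) :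
  (forall n, (n <= phi n)%N) -> f @ \oo --> y -> (fun n => f (phi n)) @ \oo --> y.
Proof. by move=> H fc V /fc; apply: sub_near. Qed.

Theorem lemma2p6 (R : realType) (S St : pseudoMetricType R)
    (Phi : R -> S -> S) (Phit : R -> St -> St)
    (e : R * R -> S) (eps : R) (pi : St -> S) (e1 e2 : R * R -> St)
    (x : S) (xt : St) :
  hausdorff_space S ->
  compact [set: S] ->
  is_flow Phi ->
  collar e eps ->
  (forall t y, collar_curve e y -> collar_curve e (Phi t y)) ->
  cutting_surgery e eps pi e1 e2 ->
  is_flow Phit ->
  (forall t yt, pi (Phit t yt) = Phi t (pi yt)) ->
  ~ collar_curve e x ->
  pi @^-1` [set x] = [set xt] ->
  pi @` omega_limit Phit xt = omega_limit Phi x.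
Proof.
move=> _ _ [_ [Phi0 PhiA]] [eps0 [ce [cie oe]]] Cinv Hcut _ Hcomm xC Hxt.
move: Hcut; rewrite /cutting_surgery /=.
move=> [cpi [upi [opi [ce1 [ce2 [ci1 [ci2 [oe1 [oe2 [pe1 [pe2 _]]]]]]]]]]].
have pxt : pi xt = x.
  have : (pi @^-1` [set x]) xt by rewrite Hxt.
  by [].
have notC : forall t, ~ collar_curve e (Phi t x).
  move=> t /(Cinv (- t)); rewrite -PhiA addNr Phi0; exact: xC.
have ua : forall t, exists! z, pi z = Phi t x by move=> t; exact: upi.
have pb : forall t, pi (Phit t xt) = Phi t x by move=> t; rewrite Hcomm pxt.
apply/seteqP; split.
  move=> _ [yt [t [tinf tcv]] <-]; exists t; split => //.
  have E : (fun n => Phi (t n) x) = pi \o (fun n => Phit (t n) xt).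
    by apply: funext => n /=; rewrite pb.
  rewrite E; exact: (cvg_comp _ _ tcv (cpi yt)).
move=> y [t [tinf tcv]].
case: (pselect (collar_curve e y)) => yC; last first.
  have [yt [pyt _]] := upi y yC.
  exists yt => //; exists t; split => //.
  move=> V; rewrite nbhsE => -[W [oW Wyt] WV].
  have oW' := opi W oW.
  have nW : nbhs y (pi @` (W `&` pi @^-1` ~` collar_curve e)).
    by apply: open_nbhs_nbhs; split => //; exists yt => //; split => //; rewrite /= pyt.
  have := tcv _ nW; rewrite !nbhs_simpl => ev.
  suff : \forall n \near \oo, V (Phit (t n) xt) by [].
  near=> n.
  have [z [Wz _] pz] : (pi @` (W `&` pi @^-1` ~` collar_curve e)) (Phi (t n) x).
    near: n; exact: ev.
  have [w [_ wu]] := ua (t n).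
  apply: WV; have -> : Phit (t n) xt = z by rewrite -(wu _ pz) (wu _ (pb (t n))).
  done.
case: yC => p zp ep.
have sp : strip eps p by rewrite /strip /= zp oppr_lt0 eps0.
have ev : \forall n \near \oo, exists c, strip eps c /\ e c = Phi (t n) x.
  have oS := oe setT openT.
  have nS : nbhs y (e @` (setT `&` strip eps)).
    by apply: open_nbhs_nbhs; split => //; exists p.
  have := tcv _ nS; rewrite !nbhs_simpl => ev.
  near=> n.
  have [c [_ sc] ec] : (e @` (setT `&` strip eps)) (Phi (t n) x).
    near: n; exact: ev.
  by exists c.
have Dl : forall q r : R * R, q.2 = r.2 -> lower_strip eps q -> lower_strip eps r.
  by move=> q r h; rewrite /lower_strip /= h.
have Du : forall q r : R * R, q.2 = r.2 -> upper_strip eps q -> upper_strip eps r.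
  by move=> q r h; rewrite /upper_strip /= h.
have lp : lower_strip eps p by rewrite /lower_strip /= zp oppr_lt0 eps0 lexx.
have up : upper_strip eps p by rewrite /upper_strip /= zp eps0 lexx.
pose Pl n := exists c, lower_strip eps c /\ strip eps c /\ e c = Phi (t n) x.
case: (pselect (forall N, exists m, (N <= m)%N /\ Pl m)) => H.
  have [phi Hphi] := choice H.
  exists (e1 p); last by rewrite pe1 // ep.
  exists (fun n => t (phi n)); split.
    move=> M; apply: (@sub_near (fun n => M < t n)); first by move=> n; case: (Hphi n).
    exact: tinf.
  apply: (@lift_key R S St e eps pi e1 _ (fun n => Phi (t (phi n)) x) (fun n => Phit (t (phi n)) xt) p oe cie ce1 ci1 pe1 Dl lp sp (fun n => ua (t (phi n)))
                   (fun n => pb (t (phi n)))).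
    by apply: nearW => n; case: (Hphi n) => _ [c [lc [sc ec]]]; exists c.
  rewrite ep; apply: (@cvg_sub _ (fun n => Phi (t n) x) y phi) => //.
  by move=> n; case: (Hphi n).
have [N HN] : exists N, forall m, (N <= m)%N -> ~ Pl m.
  apply: contrapT => H'; apply: H => N; apply: contrapT => H2; apply: H'.
  by exists N => m Nm Plm; apply: H2; exists m.
exists (e2 p); last by rewrite pe2 // ep.
exists t; split => //.
apply: (@lift_key R S St e eps pi e2 _ (fun n => Phi (t n) x) (fun n => Phit (t n) xt) p oe cie ce2 ci2 pe2 Du up sp (fun n => ua (t n))
                 (fun n => pb (t n))); last by rewrite ep.
near=> n.
have [c [sc ec]] : exists c, strip eps c /\ e c = Phi (t n) x by near: n; exact: ev.
have NN : (N <= n)%N by near: n; exact: nbhs_infty_ge.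
exists c; split; last by split.
move: (sc); rewrite /strip /upper_strip /= => /andP [h1 h2].
case: (leP 0 c.2) => hc; first by apply/andP; split.
exfalso; apply: (HN n NN); exists c; split; last by split.
by rewrite /lower_strip /= h1 (ltW hc).
Unshelve. all: end_near.
Qed.
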